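(* Let $\mathcal C$ be a $G$-category and $P\colon\mathcal C\to\mathcal C/G$ the canonical functor. For each $X\in\operatorname{Mod}\mathcal C$, $P_\bullet X$ is a $G$-graded $\mathcal C/G$-module via $(P_\bullet X)^\alpha(x):=X(\alpha x)$, $P_\bullet$ sends morphisms to degree-preserving morphisms, and the resulting functor $P_\bullet\colon\operatorname{Mod}\mathcal C\to\operatorname{Mod}_G(\mathcal C/G)$ is an equivalence of categories.
   Context: $\Bbbk$ is a commutative ring; all categories are $\Bbbk$-linear; $G$ is a group; a $G$-category is a category with a group homomorphism $G\to\operatorname{Aut}$, $\alpha\mapsto A_\alpha$, written $\alpha x,\alpha f$. $\operatorname{Mod}\mathcal D$: contravariant functors $\mathcal D\to\operatorname{Mod}\Bbbk$. Orbit category $\mathcal C/G$: objects of $\mathcal C$; morphisms $x\to y$ are row- and column-finite families $(f_{\beta,\alpha})_{(\alpha,\beta)\in G\times G}$, $f_{\beta,\alpha}\in\mathcal C(\alpha x,\beta y)$, with $f_{\gamma\beta,\gamma\alpha}=\gamma(f_{\beta,\alpha})$; composition $(gf)_{\beta,\alpha}=\sum_\gamma g_{\beta,\gamma}f_{\gamma,\alpha}$. $Px=x$, $P(f)=(\delta_{\alpha,\beta}\alpha f)$. $\mathcal C/G$ is $G$-graded: $f\in(\mathcal C/G)(y,x)$ has degree $\beta$ iff $f_{\mu,\lambda}=0$ whenever $\mu^{-1}\lambda\ne\beta$. Pushdown: $(P_\bullet X)(x)=\bigoplus_{\alpha\in G}X(\alpha x)$; for $f\colon x\to y$ in $\mathcal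 C/G$, $(P_\bullet X)(f)\colon\bigoplus_\beta X(\beta y)\to\bigoplus_\alpha X(\alpha x)$ has $(\alpha,\beta)$-entry $X(f_{\beta,\alpha})$; $(P_\bullet u)_x=\bigoplus_\alpha u_{\alpha x}$. For a $G$-graded category $\mathcal B$ (decompositions $\mathcal B(x,y)=\bigoplus_\alpha\mathcal B^\alpha(x,y)$ with $\mathcal B^\beta\mathcal B^\alpha\subseteq\mathcal B^{\beta\alpha}$), a $G$-graded $\mathcal B$-module is $M\in\operatorname{Mod}\mathcal B$ with decompositions $M(x)=\bigoplus_\alpha M^\alpha(x)$ such that $M(f)(M^\alpha(x))\subseteq M^{\alpha\beta}(y)$ for $f\in\mathcal B^\beta(y,x)$; a morphism $u\colon M\to N$ is degree-preserving if $u_x(M^\alpha(x))\subseteq N^\alpha(x)$. $\operatorname{Mod}_G\mathcal B$ is the (non-full) subcategory of $G$-graded modules and degree-preserving morphisms. *)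

(* Defs.v *)
From HB Require Import structures.
From mathcomp Require Import all_boot all_algebra.
From mathcomp Require Import boolp.
From Stdlib Require Import ProofIrrelevance FunctionalExtensionality.
Set Implicit Arguments. Unset Strict Implicit. Unset Printing Implicit Defensive.
Import GRing.Theory.
Local Open Scope ring_scope.

Definition fin_suppd (k : pzRingType) (I : eqType) (M : I -> lmodType k)
  (F : forall i, M i) : Prop :=
  exists s : seq I, forall i, i \notin s -> F i = 0.

Record dsum (k : pzRingType) (I : eqType) (M : I -> lmodType k) := DSum {
  dval : forall i, M i;
  dvalP : fin_suppd dval }.

Lemma dsum_eq k (I : eqType) (M : I -> lmodType k) (u v : dsum M) : dval u = dval v -> u = v.
Proof.
case: u => u pu; case: v => v pv /= E; subst v; congr DSum; apply: proof_irrelevance.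
Qed.

Lemma dsum0P k (I : eqType) (M : I -> lmodType k) : fin_suppd (fun i => 0 : M i).
Proof. by exists [::]. Qed.
Lemma dsumDP k (I : eqType) (M : I -> lmodType k) (u v : dsum M) :
  fin_suppd (fun i => dval u i + dval v i).
Proof.
case: u => u [s1 h1]; case: v => v [s2 h2]; exists (s1 ++ s2) => i /=.
by rewrite mem_cat negb_or => /andP[/h1 -> /h2 ->]; rewrite addr0.
Qed.
Lemma dsumZP k (I : eqType) (M : I -> lmodType k) (c : k) (u : dsum M) :
  fin_suppd (fun i => c *: dval u i).
Proof. by case: u => u [s h]; exists s => i /h /= ->; rewrite scaler0. Qed.
Lemma dsumNP k (I : eqType) (M : I -> lmodType k) (u : dsum M) :
  fin_suppd (fun i => - dval u i).
Proof. by case: u => u [s h]; exists s => i /h /= ->; rewrite oppr0. Qed.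

Definition dsum0 k (I : eqType) (M : I -> lmodType k) : dsum M := DSum (dsum0P M).
Definition dsumD k (I : eqType) (M : I -> lmodType k) (u v : dsum M) : dsum M := DSum (dsumDP u v).
Definition dsumN k (I : eqType) (M : I -> lmodType k) (u : dsum M) : dsum M := DSum (dsumNP u).
Definition dsumZ k (I : eqType) (M : I -> lmodType k) (c : k) (u : dsum M) : dsum M := DSum (dsumZP c u).

HB.instance Definition _ k (I : eqType) (M : I -> lmodType k) := gen_eqMixin (dsum M).
HB.instance Definition _ k (I : eqType) (M : I -> lmodType k) := gen_choiceMixin (dsum M).

Ltac dsum_ext := move=> *; apply: dsum_eq; apply: functional_extensionality_dep => i /=.

Lemma dsumA k (I : eqType) (M : I -> lmodType k) : associative (@dsumD k I M).
Proof. by dsum_ext; rewrite addrA. Qed.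
Lemma dsumC k (I : eqType) (M : I -> lmodType k) : commutative (@dsumD k I M).
Proof. by dsum_ext; rewrite addrC. Qed.
Lemma dsum0D k (I : eqType) (M : I -> lmodType k) : left_id (dsum0 M) (@dsumD k I M).
Proof. by dsum_ext; rewrite add0r. Qed.
Lemma dsumND k (I : eqType) (M : I -> lmodType k) : left_inverse (dsum0 M) (@dsumN k I M) (@dsumD k I M).
Proof. by dsum_ext; rewrite addNr. Qed.

HB.instance Definition _ k (I : eqType) (M : I -> lmodType k) :=
  GRing.isZmodule.Build (dsum M) (@dsumA k I M) (@dsumC k I M) (@dsum0D k I M) (@dsumND k I M).

Lemma dsumZA k (I : eqType) (M : I -> lmodType k) a b (v : dsum M) : dsumZ a (dsumZ b v) = dsumZ (a * b) v.
Proof. by dsum_ext; rewrite scalerA. Qed.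
Lemma dsumZ1 k (I : eqType) (M : I -> lmodType k) : left_id 1 (@dsumZ k I M).
Proof. by dsum_ext; rewrite scale1r. Qed.
Lemma dsumZDr k (I : eqType) (M : I -> lmodType k) : right_distributive (@dsumZ k I M) +%R.
Proof. by dsum_ext; rewrite scalerDr. Qed.
Lemma dsumZDl k (I : eqType) (M : I -> lmodType k) (v : dsum M) : {morph (@dsumZ k I M)^~ v : a b / a + b}.
Proof. by dsum_ext; rewrite scalerDl. Qed.

HB.instance Definition _ k (I : eqType) (M : I -> lmodType k) :=
  GRing.Zmodule_isLmodule.Build k (dsum M) (@dsumZA k I M) (@dsumZ1 k I M) (@dsumZDr k I M) (@dsumZDl k I M).


Definition fin_supp (k : pzRingType) (I : eqType) (V : lmodType k) (F : I -> V) : Prop :=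
  exists s : seq I, forall i, i \notin s -> F i = 0.

(* sum over a (chosen) finite support; 0 if support is infinite *)
Definition osum (k : pzRingType) (I : eqType) (V : lmodType k) (F : I -> V) : V :=
  match pselect (fin_supp F) with
  | left h => \sum_(i <- undup (sval (cid h))) F i
  | right _ => 0
  end.

Definition lin_fun (k : pzRingType) (U V : lmodType k) (h : U -> V) : Prop :=
  forall (c : k) (u v : U), h (c *: u + v) = c *: h u + h v.

Unset Implicit Arguments.
Record kcat (k : comPzRingType) := KCat {
  obj : Type;
  hom : obj -> obj -> lmodType k;
  comp : forall x y z : obj, hom y z -> hom x y -> hom x z;
  idm : forall x : obj, hom x x;
  compA : forall x y z w (h : hom z w) (g : hom y z) (f : hom x y),
    comp x y w (comp y z w h g) f = comp x z w h (comp x y z g f);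
  comp1m : forall x y (f : hom x y), comp x y y (idm y) f = f;
  compm1 : forall x y (f : hom x y), comp x x y f (idm x) = f;
  comp_linl : forall x y z (a : k) (g1 g2 : hom y z) (f : hom x y),
    comp x y z (a *: g1 + g2) f = a *: comp x y z g1 f + comp x y z g2 f;
  comp_linr : forall x y z (a : k) (g : hom y z) (f1 f2 : hom x y),
    comp x y z g (a *: f1 + f2) = a *: comp x y z g f1 + comp x y z g f2 }.
Set Implicit Arguments.
Arguments obj {k}.
Arguments hom {k} C x y : rename.
Arguments comp {k C x y z} : rename.
Arguments idm {k C} : rename.

Definition hcast (k : comPzRingType) (C : kcat k) (x x' y y' : obj C)
  (ex : x = x') (ey : y = y') (f : hom C x y) : hom C x' y' :=
  match ex in _ = x1 return hom C x1 y' with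
  | erefl => match ey in _ = y1 return hom C x y1 with erefl => f end
  end.

Unset Implicit Arguments.
Record gcat (k : comPzRingType) (G : groupType) := GCat {
  gc :> kcat k;
  gact : G -> obj gc -> obj gc;
  gacth : forall (a : G) (x y : obj gc), hom gc x y -> hom gc (gact a x) (gact a y);
  gacth_lin : forall a x y (c : k) (f g : hom gc x y),
    gacth a x y (c *: f + g) = c *: gacth a x y f + gacth a x y g;
  gacth_comp : forall a x y z (g : hom gc y z) (f : hom gc x y),
    gacth a x z (comp g f) = comp (gacth a y z g) (gacth a x y f);
  gacth_id : forall a x, gacth a x x (idm x) = idm (gact a x);
  gact1 : forall x, gact 1%g x = x;
  gacth1 : forall x y (f : hom gc x y),
    gacth 1%g x y f = hcast (esym (gact1 x)) (esym (gact1 y)) f;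
  gactM : forall a b x, gact (a * b)%g x = gact a (gact b x);
  gacthM : forall a b x y (f : hom gc x y),
    gacth (a * b)%g x y f =
    hcast (esym (gactM a b x)) (esym (gactM a b y)) (gacth a _ _ (gacth b x y f)) }.
Set Implicit Arguments.
Arguments gact {k G} C a x : rename.
Arguments gacth {k G} C a {x y} : rename.
Arguments gactM {k G} C a b x : rename.

(* The orbit category C/G.  A (raw) morphism x -> y is a family
   f b a = f_{b,a} in C(a x, b y); [ofam_ok] says it is row- and
   column-finite and satisfies f_{cb,ca} = c(f_{b,a}).                 *)
Definition ofam k G (C : gcat k G) (x y : obj C) :=
  forall b a : G, hom C (gact C a x) (gact C b y).
Arguments ofam {k G} C x y.

Definition ofam_ok k G (C : gcat k G) (x y : obj C) (f : ofam C x y) : Prop :=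
  [/\ (forall a, @fin_suppd k G (fun b => hom C (gact C a x) (gact C b y)) (fun b => f b a)),
      (forall b, @fin_suppd k G (fun a => hom C (gact C a x) (gact C b y)) (fun a => f b a))
    & (forall c b a, f (c * b)%g (c * a)%g =
         hcast (esym (gactM C c a x)) (esym (gactM C c b y)) (gacth C c (f b a)))].

Definition ocomp k G (C : gcat k G) (x y z : obj C)
  (g : ofam C y z) (f : ofam C x y) : ofam C x z :=
  fun b a => osum (fun c => comp (g b c) (f c a)).

Definition olin k G (C : gcat k G) (x y : obj C) (c : k) (f g : ofam C x y) : ofam C x y :=
  fun b a => c *: f b a + g b a.

Definition Pmor k G (C : gcat k G) (x y : obj C) (f : hom C x y) : ofam C x y :=
  fun b a => match a =P b with
             | ReflectT e => hcast (erefl _) (congr1 (fun c => gact C c y) e) (gacth C a f)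
             | ReflectF _ => 0
             end.

Arguments Pmor {k G C x y}.
Definition oid k G (C : gcat k G) (x : obj C) : ofam C x x := Pmor (idm x).
Arguments oid {k G} C x.

Definition odeg k G (C : gcat k G) (y x : obj C) (f : ofam C y x) (beta : G) : Prop :=
  forall mu lam : G, (mu^-1 * lam)%g != beta -> f mu lam = 0.

Record cmod k (C : kcat k) := CMod {
  cob : obj C -> lmodType k;
  cmap : forall x y : obj C, hom C x y -> cob y -> cob x }.
Arguments cob {k C} : rename.
Arguments cmap {k C} X {x y} : rename.

Definition is_cmod k (C : kcat k) (X : cmod C) : Prop :=
  [/\ (forall x y (f : hom C x y), lin_fun (cmap X f)),
      (forall x y (c : k) (f g : hom C x y) m,
          cmap X (c *: f + g) m = c *: cmap X f m + cmap X g m),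
      (forall x m, cmap X (idm x) m = m)
    & (forall x y z (g : hom C y z) (f : hom C x y) m,
          cmap X (comp g f) m = cmap X f (cmap X g m))].

Definition chom k (C : kcat k) (X Y : cmod C) := forall x, cob X x -> cob Y x.

Definition is_chom k (C : kcat k) (X Y : cmod C) (u : chom X Y) : Prop :=
  (forall x, lin_fun (u x)) /\
  (forall x y (f : hom C x y) m, u x (cmap X f m) = cmap Y f (u y m)).

Record omod k G (C : gcat k G) := OMod {
  oob : obj C -> lmodType k;
  omap : forall x y : obj C, ofam C x y -> oob y -> oob x }.
Arguments oob {k G C} : rename.
Arguments omap {k G C} M {x y} : rename.

Definition is_omod k G (C : gcat k G) (M : omod C) : Prop :=
  [/\ (forall x y (f : ofam C x y), ofam_ok f -> lin_fun (omap M f)),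
      (forall x y (c : k) (f g : ofam C x y) m, ofam_ok f -> ofam_ok g ->
          omap M (olin c f g) m = c *: omap M f m + omap M g m),
      (forall x m, omap M (oid C x) m = m)
    & (forall x y z (g : ofam C y z) (f : ofam C x y) m, ofam_ok f -> ofam_ok g ->
          omap M (ocomp g f) m = omap M f (omap M g m))].

(* a G-graded C/G-module: a C/G-module M with decompositions
   M(x) = (+)_a M^a(x), given by the homogeneous components ggr x a *)
Record gomod k G (C : gcat k G) := GOMod {
  gmod : omod C;
  ggr : forall (x : obj C), G -> oob gmod x -> Prop }.
Arguments gmod {k G C} : rename.
Arguments ggr {k G C} M x a m : rename.

Definition is_graded k G (C : gcat k G) (M : gomod C) : Prop :=
  [/\
      (forall x a, ggr M x a 0 /\
         forall (c : k) u v, ggr M x a u -> ggr M x a v -> ggr M x a (c *: u + v)),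
      (forall x (m : oob (gmod M) x), exists (s : seq G) (h : G -> oob (gmod M) x),
         [/\ uniq s, forall a, ggr M x a (h a) & m = \sum_(a <- s) h a]),
      (forall x (s : seq G) (h : G -> oob (gmod M) x), uniq s ->
         (forall a, ggr M x a (h a)) -> \sum_(a <- s) h a = 0 ->
         forall a, a \in s -> h a = 0)
    &
      (forall (x y : obj C) (f : ofam C y x) (b a : G) m, ofam_ok f -> odeg f b ->
         ggr M x a m -> ggr M y (a * b)%g (omap (gmod M) f m))].

Definition ohom k G (C : gcat k G) (M N : gomod C) :=
  forall x, oob (gmod M) x -> oob (gmod N) x.

Definition is_ohom k G (C : gcat k G) (M N : gomod C) (u : ohom M N) : Prop :=
  (forall x, lin_fun (u x)) /\
  (forall x y (f : ofam C x y) m, ofam_ok f ->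
     u x (omap (gmod M) f m) = omap (gmod N) f (u y m)).

Definition deg_pres k G (C : gcat k G) (M N : gomod C) (u : ohom M N) : Prop :=
  forall x a m, ggr M x a m -> ggr N x a (u x m).

Record pcat := PCat {
  pob : Type;
  phom : pob -> pob -> Type;
  pob_ok : pob -> Prop;
  phom_ok : forall A B, phom A B -> Prop;
  pid : forall A, phom A A;
  pcomp : forall A B C, phom B C -> phom A B -> phom A C;
  pheq : forall A B, phom A B -> phom A B -> Prop }.
Arguments phom_ok {D A B} : rename.
Arguments pid {D} A : rename.
Arguments pcomp {D A B C} : rename.
Arguments pheq {D A B} : rename.

Definition is_pfunctor (D E : pcat) (Fo : pob D -> pob E)
  (Fh : forall A B, phom A B -> phom (Fo A) (Fo B)) : Prop :=
  [/\ (forall A, pob_ok A -> pob_ok (Fo A)),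
      (forall A B (u : phom A B), pob_ok A -> pob_ok B -> phom_ok u -> phom_ok (Fh A B u)),
      (forall A B (u v : phom A B), pob_ok A -> pob_ok B -> phom_ok u -> phom_ok v ->
          pheq u v -> pheq (Fh A B u) (Fh A B v)),
      (forall A, pob_ok A -> pheq (Fh A A (pid A)) (pid (Fo A)))
    & (forall A B C (u : phom A B) (v : phom B C),
          pob_ok A -> pob_ok B -> pob_ok C -> phom_ok u -> phom_ok v ->
          pheq (Fh A C (pcomp v u)) (pcomp (Fh B C v) (Fh A B u)))].

Definition pnatiso (D E : pcat) (F1 F2 : pob D -> pob E)
  (F1h : forall A B, phom A B -> phom (F1 A) (F1 B))
  (F2h : forall A B, phom A B -> phom (F2 A) (F2 B)) : Prop :=
  exists (eta : forall A, phom (F1 A) (F2 A)) (eta' : forall A, phom (F2 A) (F1 A)),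
    (forall A, pob_ok A ->
       [/\ phom_ok (eta A), phom_ok (eta' A),
           pheq (pcomp (eta' A) (eta A)) (pid (F1 A))
         & pheq (pcomp (eta A) (eta' A)) (pid (F2 A))]) /\
    (forall A B (u : phom A B), pob_ok A -> pob_ok B -> phom_ok u ->
       pheq (pcomp (eta B) (F1h A B u)) (pcomp (F2h A B u) (eta A))).

Arguments pnatiso {D E} F1 F2 F1h F2h.

Definition is_pequiv (D E : pcat) (Fo : pob D -> pob E)
  (Fh : forall A B, phom A B -> phom (Fo A) (Fo B)) : Prop :=
  is_pfunctor Fh /\
  exists (Go : pob E -> pob D) (Gh : forall A B, phom A B -> phom (Go A) (Go B)),
    [/\ is_pfunctor Gh,
        pnatiso (fun A => A) (fun A => Go (Fo A))
                (fun A B u => u) (fun A B u => Gh _ _ (Fh A B u))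
      & pnatiso (fun B => Fo (Go B)) (fun B => B)
                (fun A B u => Fh _ _ (Gh A B u)) (fun A B u => u)].

Definition ModC k (C : kcat k) : pcat :=
  @PCat (cmod C) (@chom k C) (@is_cmod k C) (@is_chom k C)
        (fun X x m => m) (fun X Y Z v u x m => v x (u x m))
        (fun X Y u v => forall x m, u x m = v x m).

Definition ModGorb k G (C : gcat k G) : pcat :=
  @PCat (gomod C) (@ohom k G C)
        (fun M => is_omod (gmod M) /\ is_graded M)
        (fun M N u => is_ohom u /\ deg_pres u)
        (fun M x m => m) (fun M N L v u x m => v x (u x m))
        (fun M N u v => forall x m, u x m = v x m).

Definition pd_ob k G (C : gcat k G) (X : cmod C) (x : obj C) : lmodType k :=
  dsum (fun a : G => cob X (gact C a x)).

Definition pd_map k G (C : gcat k G) (X : cmod C) (x y : obj C) (f : ofam C x y)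
  (xi : pd_ob X y) : pd_ob X x :=
  let g := fun a : G => osum (fun b : G => cmap X (f b a) (dval xi b)) in
  match pselect (fin_suppd g) with
  | left h => DSum h
  | right _ => 0
  end.

Definition pushdown k G (C : gcat k G) (X : cmod C) : omod C :=
  @OMod k G C (pd_ob X) (@pd_map k G C X).

(* (P_.X)^a(x) := X(a x), the a-th summand of (+)_b X(b x) *)
Definition pd_grade k G (C : gcat k G) (X : cmod C) (x : obj C) (a : G)
  (xi : pd_ob X x) : Prop :=
  forall b, b != a -> dval xi b = 0.

Definition Pob k G (C : gcat k G) (X : cmod C) : gomod C :=
  @GOMod k G C (pushdown X) (@pd_grade k G C X).

Definition pd_hom k G (C : gcat k G) (X Y : cmod C) (u : chom X Y) : ohom (Pob X) (Pob Y) :=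
  fun x xi =>
    let g := fun a : G => u (gact C a x) (dval xi a) in
    match pselect (fin_suppd g) with
    | left h => DSum h
    | right _ => 0
    end.

(* Main.v *)
Require Import Defs.
From HB Require Import structures.
From mathcomp Require Import all_boot all_algebra.
From mathcomp Require Import boolp.
From Stdlib Require Import ProofIrrelevance FunctionalExtensionality.
Require Import Defs.
Set Implicit Arguments. Unset Strict Implicit. Unset Printing Implicit Defensive.
Import GRing.Theory.
Local Open Scope ring_scope.

Section Osum.
Variables (k : pzRingType) (I : eqType) (V : lmodType k).
Implicit Types (F : I -> V).

Lemma sum_supp (s t : seq I) F : uniq s -> uniq t ->
  (forall i, i \notin s -> F i = 0) -> (forall i, i \notin t -> F i = 0) ->
  \sum_(i <- s) F i = \sum_(i <- t) F i.
Proof.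
move=> us ut hs ht.
rewrite (bigID (fun i => i \in t)) /= [X in _ + X]big1; last first.
  move=> i hi. apply: ht. exact: hi.
rewrite (addr0 (\sum_(i <- s | i \in t) F i)).
rewrite [RHS](bigID (fun i => i \in s)) /= [X in _ + X]big1; last first.
  move=> i hi. apply: hs. exact: hi.
rewrite (addr0 (\sum_(i <- t | i \in s) F i)).
rewrite -(big_filter s) -(big_filter t); apply: perm_big; apply: uniq_perm; rewrite ?filter_uniq //.
by move=> i; rewrite !mem_filter andbC.
Qed.

Lemma osumE (s : seq I) F : uniq s -> (forall i, i \notin s -> F i = 0) ->
  osum F = \sum_(i <- s) F i.
Proof.
move=> us hs; rewrite /osum; case: pselect => [h|[]]; last by exists s.
case: (cid h) => t ht /=; symmetry; apply: (sum_supp us (undup_uniq t) hs).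
by move=> i; rewrite mem_undup; apply: ht.
Qed.

Lemma osumE' (s : seq I) F : (forall i, i \notin s -> F i = 0) ->
  osum F = \sum_(i <- undup s) F i.
Proof. by move=> hs; apply: osumE; [exact: undup_uniq| move=> i; rewrite mem_undup; apply: hs]. Qed.

Lemma osum0 F : (forall i, F i = 0) -> osum F = 0.
Proof. by move=> h; rewrite (@osumE [::]) ?big_nil. Qed.

Lemma osum1 i0 F : (forall i, i != i0 -> F i = 0) -> osum F = F i0.
Proof.
move=> h; rewrite (@osumE [:: i0]) ?big_seq1 // => i; rewrite inE; exact: h.
Qed.

Lemma osum_ext F1 F2 : (forall i, F1 i = F2 i) -> osum F1 = osum F2.
Proof. by move=> h; have -> : F1 = F2 by apply: functional_extensionality. Qed.

End Osum.

Lemma lin0 (k : pzRingType) (U V : lmodType k) (h : U -> V) : lin_fun h -> h 0 = 0.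
Proof.
move=> hl; have E := hl 1 0 0; rewrite !scale1r addr0 in E.
by have := congr1 (fun z => z - h 0) E; rewrite /= subrr addrK => E'; rewrite -E'.
Qed.

Lemma linD (k : pzRingType) (U V : lmodType k) (h : U -> V) : lin_fun h ->
  forall u v, h (u + v) = h u + h v.
Proof. by move=> hl u v; have := hl 1 u v; rewrite !scale1r. Qed.

Lemma linZ (k : pzRingType) (U V : lmodType k) (h : U -> V) : lin_fun h ->
  forall c u, h (c *: u) = c *: h u.
Proof. by move=> hl c u; have := hl c u 0; rewrite addr0 (lin0 hl) addr0. Qed.

Lemma lin_sum (k : pzRingType) (U V : lmodType k) (h : U -> V) (J : Type) (s : seq J) (F : J -> U) :
  lin_fun h -> h (\sum_(j <- s) F j) = \sum_(j <- s) h (F j).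
Proof.
move=> hl; elim: s => [|j s IH]; first by rewrite !big_nil lin0.
by rewrite !big_cons linD // IH.
Qed.

Lemma osum_lin (k : pzRingType) (I : eqType) (U V : lmodType k) (h : U -> V) (F : I -> U) (s : seq I) :
  lin_fun h -> (forall i, i \notin s -> F i = 0) -> h (osum F) = osum (fun i => h (F i)).
Proof.
move=> hl hs; rewrite (osumE' hs) (@osumE' _ _ _ s) ?lin_sum //.
by move=> i /hs ->; rewrite lin0.
Qed.

Lemma osum_linc (k : pzRingType) (I : eqType) (V : lmodType k) (c : k) (F G : I -> V) (s : seq I) :
  (forall i, i \notin s -> F i = 0) -> (forall i, i \notin s -> G i = 0) ->
  osum (fun i => c *: F i + G i) = c *: osum F + osum G.
Proof.
move=> hF hG; rewrite (osumE' hF) (osumE' hG) (@osumE' _ _ _ s).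
  by rewrite big_split /= scaler_sumr.
by move=> i hi; rewrite hF // hG // scaler0 addr0.
Qed.

Lemma osum_swap (k : pzRingType) (I J : eqType) (V : lmodType k) (F : I -> J -> V)
  (s : seq I) (t : seq J) :
  (forall i j, i \notin s -> F i j = 0) -> (forall i j, j \notin t -> F i j = 0) ->
  osum (fun i => osum (fun j => F i j)) = osum (fun j => osum (fun i => F i j)).
Proof.
move=> hs ht.
rewrite (@osumE' _ _ _ s); last by move=> i hi; apply: osum0 => j; apply: hs.
rewrite (@osumE' _ _ _ t); last by move=> j hj; apply: osum0 => i; apply: ht.
rewrite (eq_bigr (fun i => \sum_(j <- undup t) F i j)); last by move=> i _; apply: osumE' => j; apply: ht.
rewrite [RHS](eq_bigr (fun j => \sum_(i <- undup s) F i j)); last by move=> j _; apply: osumE' => i; apply: hs.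
exact: exchange_big.
Qed.

Lemma osum_reindex (k : pzRingType) (I : eqType) (V : lmodType k) (F : I -> V) (f g : I -> I) (s : seq I) :
  cancel f g -> cancel g f -> (forall i, i \notin s -> F i = 0) ->
  osum (fun i => F (f i)) = osum F.
Proof.
move=> fg gf hs.
rewrite (osumE' hs) (@osumE' _ _ _ (map g s)).
  rewrite (@sum_supp _ _ _ (undup (map g s)) (map g (undup s))) ?undup_uniq //.
  - by rewrite big_map; apply: eq_bigr => i _; rewrite gf.
  - by rewrite map_inj_uniq ?undup_uniq //; apply: can_inj gf.
  - by move=> i; rewrite mem_undup => hi; apply: hs; apply: contra hi => h; rewrite -[i]fg map_f.
  - move=> i hi; apply: hs; apply: contra hi => h; rewrite -[i]fg map_f // mem_undup //.
by move=> i hi; apply: hs; apply: contra hi => h; rewrite -[i]fg map_f.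
Qed.

Section Casts.
Variables (k : comPzRingType) (C : kcat k).

Lemma hcast_comp (x x' y y' z z' : obj C) (ex : x = x') (ey : y = y') (ez : z = z')
  (g : hom C y z) (f : hom C x y) :
  comp (hcast ey ez g) (hcast ex ey f) = hcast ex ez (comp g f).
Proof. by subst. Qed.

Lemma hcast_id (x x' : obj C) (e : x = x') : hcast e e (idm x) = idm x'.
Proof. by subst. Qed.

Lemma hcast_lin (x x' y y' : obj C) (ex : x = x') (ey : y = y') : lin_fun (@hcast k C x x' y y' ex ey).
Proof. by subst. Qed.

Lemma hcast0 (x x' y y' : obj C) (ex : x = x') (ey : y = y') : hcast ex ey (0 : hom C x y) = 0.
Proof. exact: lin0 (hcast_lin ex ey). Qed.

Lemma hcast_trans (x x' x'' y y' y'' : obj C) (ex : x = x') (ey : y = y') (ex' : x' = x'') (ey' : y' = y'') f :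
  hcast ex' ey' (hcast ex ey f) = hcast (etrans ex ex') (etrans ey ey') f.
Proof. by subst. Qed.

Lemma hcast_irr (x x' y y' : obj C) (ex ex' : x = x') (ey ey' : y = y') f :
  hcast ex ey f = hcast ex' ey' f.
Proof. by rewrite (proof_irrelevance _ ex ex') (proof_irrelevance _ ey ey'). Qed.

Lemma hcast_refl (x y : obj C) (ex : x = x) (ey : y = y) f : hcast ex ey f = f.
Proof. by rewrite (proof_irrelevance _ ex erefl) (proof_irrelevance _ ey erefl). Qed.

Lemma comp_linL (x y z : obj C) (f : hom C x y) : lin_fun (fun g : hom C y z => comp g f).
Proof. by move=> a g1 g2; apply: comp_linl. Qed.
Lemma comp_linR (x y z : obj C) (g : hom C y z) : lin_fun (fun f : hom C x y => comp g f).
Proof. by move=> a g1 g2; apply: comp_linr. Qed.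
Lemma comp0m (x y z : obj C) (f : hom C x y) : comp (0 : hom C y z) f = 0.
Proof. exact: lin0 (comp_linL f). Qed.
Lemma compm0 (x y z : obj C) (g : hom C y z) : comp g (0 : hom C x y) = 0.
Proof. exact: lin0 (comp_linR g). Qed.

End Casts.

Lemma fin_union (I J : eqType) (Q : I -> J -> Prop) :
  (forall d, exists s : seq J, forall b, b \notin s -> Q d b) ->
  forall l : seq I, exists S : seq J, forall d b, d \in l -> b \notin S -> Q d b.
Proof.
move=> h; elim=> [|d l [S HS]]; first by exists [::].
have [s hs] := h d; exists (s ++ S) => d' b; rewrite inE mem_cat negb_or => /orP[/eqP->|hd] /andP[h1 h2].
  exact: hs.
exact: HS.
Qed.

Section CG.
Variables (k : comPzRingType) (G : groupType) (C : gcat k G).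

Lemma gacth_lin' a (x y : obj C) : lin_fun (@gacth k G C a x y).
Proof. by move=> c f g; apply: gacth_lin. Qed.
Lemma gacth0 a (x y : obj C) : gacth C a (0 : hom C x y) = 0.
Proof. exact: lin0 (@gacth_lin' a x y). Qed.

Lemma Pmor_diag (x y : obj C) (f : hom C x y) a : Pmor f a a = gacth C a f.
Proof. by rewrite /Pmor; case: eqP => // e; rewrite hcast_refl. Qed.

Lemma Pmor_off (x y : obj C) (f : hom C x y) b a : a != b -> Pmor f b a = 0.
Proof. by rewrite /Pmor; case: eqP. Qed.

Lemma ofam_ok_Pmor (x y : obj C) (f : hom C x y) : ofam_ok (Pmor f).
Proof.
split.
- by move=> a; exists [:: a] => b; rewrite inE eq_sym => /Pmor_off.
- by move=> b; exists [:: b] => a; rewrite inE => /Pmor_off.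
move=> c b a; have [<-|ne] := eqVneq a b.
  by rewrite !Pmor_diag gacthM.
rewrite !Pmor_off ?gacth0 ?hcast0 //.
by apply: contra ne => /eqP /mulgI ->.
Qed.

Definition ofam0 (x y : obj C) : ofam C x y := fun b a => 0.

Lemma ofam_ok0 (x y : obj C) : ofam_ok (ofam0 x y).
Proof.
split; [by move=> a; exists [::]|by move=> b; exists [::]|].
by move=> c b a; rewrite /ofam0 gacth0 hcast0.
Qed.

Lemma ofam_ok_lin (x y : obj C) c (f g : ofam C x y) : ofam_ok f -> ofam_ok g -> ofam_ok (olin c f g).
Proof.
case=> f1 f2 f3 [g1 g2 g3]; split.
- move=> a; have [s hs] := f1 a; have [t ht] := g1 a; exists (s ++ t) => b.
  by rewrite mem_cat negb_or => /andP[/hs h1 /ht h2]; rewrite /olin h1 h2 scaler0 addr0.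
- move=> b; have [s hs] := f2 b; have [t ht] := g2 b; exists (s ++ t) => a.
  by rewrite mem_cat negb_or => /andP[/hs h1 /ht h2]; rewrite /olin h1 h2 scaler0 addr0.
move=> d b a; rewrite /olin f3 g3 gacth_lin; symmetry; exact: hcast_lin.
Qed.

Lemma ocomp_ok (x y z : obj C) (g : ofam C y z) (f : ofam C x y) :
  ofam_ok f -> ofam_ok g -> ofam_ok (ocomp g f).
Proof.
case=> f1 f2 f3 [g1 g2 g3]; split.
- move=> a; have [s hs] := f1 a.
  have [S HS] := fin_union (Q := fun d b => g b d = 0) g1 s.
  exists S => b hb; apply: osum0 => d; have [ds|dns] := boolP (d \in s).
    by rewrite (HS d b ds hb) comp0m.
  by rewrite (hs d dns) compm0.
- move=> b; have [s hs] := g2 b.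
  have [S HS] := fin_union (Q := fun d a => f d a = 0) f2 s.
  exists S => a ha; apply: osum0 => d; have [ds|dns] := boolP (d \in s).
    by rewrite (HS d a ds ha) compm0.
  by rewrite (hs d dns) comp0m.
move=> c b a; rewrite /ocomp.
have [s hs] := g2 b.
rewrite -(@osum_reindex _ _ _ _ (fun d => c * d)%g (fun d => c^-1 * d)%g (map (fun d => c * d)%g s)); first last.
- move=> d hd; rewrite (_ : g _ d = 0) ?comp0m //.
  rewrite -[d](mulVKg c) g3 (hs (c^-1 * d)%g) ?gacth0 ?hcast0 //.
  by apply: contra hd => h; apply/mapP; exists (c^-1 * d)%g => //; rewrite mulVKg.
- by move=> d; rewrite mulVKg.
- by move=> d; rewrite mulKg.
rewrite (@osum_lin _ _ _ _ (fun w : hom C (gact C a x) (gact C b z) => hcast (esym (gactM C c a x)) (esym (gactM C c b z)) (gacth C c w)) _ s).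
- by apply: osum_ext => d; rewrite g3 f3 hcast_comp gacth_comp.

- by move=> e u v; rewrite gacth_lin hcast_lin.
by move=> d /hs ->; rewrite comp0m.
Qed.

End CG.

Lemma sum_single (k : pzRingType) (I : eqType) (V : lmodType k) (r : seq I) (j : I) (F : I -> V) :
  uniq r -> (forall i, i != j -> F i = 0) -> \sum_(i <- r) F i = if j \in r then F j else 0.
Proof.
move=> ur hF; have [jr|jr] := boolP (j \in r).
  rewrite (bigD1_seq j jr ur) /= big1; first by rewrite addr0.
  by move=> i; apply: hF.
rewrite big1_seq // => i /andP[_ ir]; apply: hF; apply: contraNneq jr => <-; exact: ir.
Qed.

Section DsumLemmas.
Variables (k : pzRingType) (I : eqType) (M : I -> lmodType k).
Lemma dvalD (u v : dsum M) i : dval (u + v) i = dval u i + dval v i. Proof. by []. Qed.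
Lemma dvalZ c (u : dsum M) i : dval (c *: u) i = c *: dval u i. Proof. by []. Qed.
Lemma dval0 i : dval (0 : dsum M) i = 0. Proof. by []. Qed.
Lemma dval_sum (J : Type) (r : seq J) (F : J -> dsum M) i :
  dval (\sum_(j <- r) F j) i = \sum_(j <- r) dval (F j) i.
Proof.
elim: r => [|j r IH]; first by rewrite !big_nil.
by rewrite !big_cons dvalD IH.
Qed.
Lemma dsum_ext (u v : dsum M) : (forall i, dval u i = dval v i) -> u = v.
Proof. by move=> h; apply: dsum_eq; apply: functional_extensionality_dep. Qed.

Lemma dres_P (u : dsum M) a : fin_suppd (fun b => if b == a then dval u b else 0).
Proof. by exists [:: a] => b; rewrite inE => /negbTE ->. Qed.
Definition dres (u : dsum M) a : dsum M := DSum (dres_P u a).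
End DsumLemmas.

Section Push.
Variables (k : comPzRingType) (G : groupType) (C : gcat k G).

Section OneMod.
Variables (X : cmod C).
Hypothesis HX : is_cmod X.

Lemma cmap_lin (x y : obj C) (f : hom C x y) : lin_fun (cmap X f).
Proof. by case: HX. Qed.
Lemma cmap_linh (x y : obj C) (m : cob X y) : lin_fun (fun f : hom C x y => cmap X f m).
Proof. by case: HX => _ h _ _ c f g; apply: h. Qed.
Lemma cmap0m (x y : obj C) (m : cob X y) : cmap X (0 : hom C x y) m = 0.
Proof. exact: lin0 (cmap_linh m). Qed.
Lemma cmapm0 (x y : obj C) (f : hom C x y) : cmap X f 0 = 0.
Proof. exact: lin0 (cmap_lin f). Qed.
Lemma cmap_id (x : obj C) m : cmap X (idm x) m = m.
Proof. by case: HX. Qed.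
Lemma cmap_comp (x y z : obj C) (g : hom C y z) (f : hom C x y) m :
  cmap X (comp g f) m = cmap X f (cmap X g m).
Proof. by case: HX. Qed.

Lemma pd_mapE (x y : obj C) (f : ofam C x y) (xi : pd_ob X y) a :
  (forall b, fin_suppd (fun a => f b a)) ->
  dval (pd_map f xi) a = osum (fun b => cmap X (f b a) (dval xi b)).
Proof.
move=> f2; rewrite /pd_map; case: pselect => [h|nh] //; exfalso; apply: nh.
case: xi => xi [s hs] /=.
have [S HS] := fin_union (Q := fun b a => f b a = 0) f2 s.
exists S => a' ha'; apply: osum0 => b; have [bs|bns] := boolP (b \in s).
  by rewrite (HS b a' bs ha') cmap0m.
by rewrite hs // cmapm0.
Qed.

Lemma ok_row (x y : obj C) (f : ofam C x y) : ofam_ok f -> forall b, fin_suppd (fun a => f b a).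
Proof. by case. Qed.
Lemma ok_col (x y : obj C) (f : ofam C x y) : ofam_ok f -> forall a, fin_suppd (fun b => f b a).
Proof. by case. Qed.

Lemma pushdown_omod : is_omod (pushdown X).
Proof.
split.
- move=> x y f hf c u v; apply: dsum_ext => a /=.
  rewrite !pd_mapE; try exact: ok_row hf.
  case: u => u [s hs]; case: v => v [t ht] /=.
  rewrite -(@osum_linc _ _ _ _ _ _ (s ++ t)).
  + by apply: osum_ext => b /=; rewrite cmap_lin.
  + by move=> b; rewrite mem_cat negb_or => /andP[/hs -> _]; rewrite cmapm0.
  + by move=> b; rewrite mem_cat negb_or => /andP[_ /ht ->]; rewrite cmapm0.
- move=> x y c f g m hf hg; apply: dsum_ext => a /=.
  rewrite !pd_mapE; try exact: ok_row; try exact: ok_row (ofam_ok_lin c hf hg).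
  case: m => m [s hs] /=.
  rewrite -(@osum_linc _ _ _ _ _ _ s).
  + by apply: osum_ext => b; rewrite /olin; case: HX => _ h _ _; rewrite h.
  + by move=> b /hs ->; rewrite cmapm0.
  + by move=> b /hs ->; rewrite cmapm0.
- move=> x m; apply: dsum_ext => a /=.
  rewrite pd_mapE; last exact: ok_row (ofam_ok_Pmor (idm x)).
  rewrite (@osum1 _ _ _ a); first by rewrite /oid Pmor_diag gacth_id cmap_id.
  by move=> b nb; rewrite /oid Pmor_off 1?eq_sym // cmap0m.
move=> x y z g f m hf hg; apply: dsum_ext => a /=.
rewrite !pd_mapE; try exact: ok_row; try exact: ok_row (ocomp_ok hf hg).
case: (dvalP m) => s hs.
have [t ht] := fin_union (Q := fun b c => g b c = 0) (ok_row hg) s.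
have E1 : forall b, cmap X (ocomp g f b a) (dval m b) =
   osum (fun c => cmap X (f c a) (cmap X (g b c) (dval m b))).
  move=> b; have [tb htb] := ok_row hg b.
  rewrite /ocomp (@osum_lin _ _ _ _ (fun h => cmap X h (dval m b)) _ tb).
  + by apply: osum_ext => c; rewrite cmap_comp.
  + exact: cmap_linh.
  by move=> c /htb ->; rewrite comp0m.
rewrite (osum_ext E1).
have E2 : forall c, cmap X (f c a) (dval (pd_map g m) c) =
   osum (fun b => cmap X (f c a) (cmap X (g b c) (dval m b))).
  move=> c; rewrite pd_mapE; last exact: ok_row hg.
  apply: (@osum_lin _ _ _ _ _ _ s); first exact: cmap_lin.
  by move=> b /hs ->; rewrite cmapm0.
rewrite (osum_ext E2).
apply: (osum_swap (s := s) (t := t)).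
  by move=> b c /hs ->; rewrite !cmapm0.
move=> b c hc; have [bs|bns] := boolP (b \in s).
  by rewrite (ht b c bs hc) cmap0m cmapm0.
by rewrite hs // !cmapm0.
Qed.

Lemma pushdown_graded : is_graded (Pob X).
Proof.
split.
- move=> x a; split; first by move=> b _.
  by move=> c u v hu hv b nb; rewrite dvalD dvalZ hu // hv // scaler0 addr0.
- move=> x m; case: (dvalP m) => s hs.
  exists (undup s), (dres m); split; first exact: undup_uniq.
    by move=> a b /negbTE /= ->.
  apply: dsum_ext => b; rewrite dval_sum (@sum_single _ _ _ _ b).
  + rewrite mem_undup; case: ifP => bs /=; first by rewrite eqxx.
    by rewrite hs // bs.
  + exact: undup_uniq.
  + by move=> a; rewrite /= eq_sym => /negbTE ->.
- move=> x s h us hg hsum a ais; apply: dsum_ext => b.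
  rewrite dval0; have [<-|nab] := eqVneq a b; last by apply: hg; rewrite eq_sym.
  have := congr1 (fun u => dval u a) hsum; rewrite /= dval_sum.
  rewrite (@sum_single _ _ _ _ a) //; first by rewrite ais.
  by move=> i nia; apply: hg; rewrite eq_sym.
move=> x y f b a m hf hd hm l nl /=.
rewrite pd_mapE; last exact: ok_row hf.
rewrite (@osum1 _ _ _ a); last by move=> mu nmu; rewrite hm // cmapm0.
rewrite hd ?cmap0m //; apply: contra nl => /eqP <-.
by rewrite mulVKg.
Qed.

End OneMod.

Lemma pd_homE (X Y : cmod C) (u : chom X Y) (x : obj C) (xi : pd_ob X x) a :
  is_chom u -> dval (pd_hom u xi) a = u (gact C a x) (dval xi a).
Proof.
move=> [hl _]; rewrite /pd_hom; case: pselect => // nh; exfalso; apply: nh.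
case: (dvalP xi) => s hs; exists s => b /hs ->; exact: lin0 (hl _).
Qed.

Lemma pd_hom_ok (X Y : cmod C) (u : chom X Y) : is_cmod X -> is_cmod Y -> is_chom u ->
  is_ohom (pd_hom u) /\ deg_pres (pd_hom u).
Proof.
move=> hX hY hu; have [hl hn] := hu; split; first split.
- move=> x c v w; apply: dsum_ext => a.
  by rewrite dvalD dvalZ !pd_homE // dvalD dvalZ hl.
- move=> x y f m hf; apply: dsum_ext => a.
  rewrite pd_homE // !pd_mapE //; try exact: ok_row hf.
  case: (dvalP m) => s hs.
  rewrite (@osum_lin _ _ _ _ _ _ s); first last.
  + by move=> b /hs ->; rewrite cmapm0.
  + exact: hl.
  by apply: osum_ext => b; rewrite hn pd_homE.
move=> x a m hm b nb; rewrite pd_homE // hm //; exact: lin0 (hl _).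
Qed.

End Push.

Section Gsub.
Variables (k : pzRingType) (V : lmodType k) (P : V -> Prop).
Definition closedP := P 0 /\ forall c u v, P u -> P v -> P (c *: u + v).
Definition QP (v : V) := closedP -> P v.
Record gsub := GSub { gval : V; gvalP : QP gval }.

Lemma gsub_eq (u v : gsub) : gval u = gval v -> u = v.
Proof.
case: u => u pu; case: v => v pv /= E; subst v; congr GSub; apply: proof_irrelevance.
Qed.

Lemma QP0 : QP 0. Proof. by case. Qed.
Lemma QPl c u v : QP u -> QP v -> QP (c *: u + v).
Proof. by move=> hu hv cl; case: (cl) => _ h; apply: h; [apply: hu|apply: hv]. Qed.
Lemma QPD u v : QP u -> QP v -> QP (u + v).
Proof. by move=> hu hv; rewrite -[u]scale1r; apply: QPl. Qed.
Lemma QPN u : QP u -> QP (- u).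
Proof. by move=> hu; rewrite -scaleN1r -[X in QP X]addr0; apply: QPl => //; apply: QP0. Qed.
Lemma QPZ c u : QP u -> QP (c *: u).
Proof. by move=> hu; rewrite -[X in QP X]addr0; apply: QPl => //; apply: QP0. Qed.

Definition gsub0 := GSub QP0.
Definition gsubD (u v : gsub) := GSub (QPD (gvalP u) (gvalP v)).
Definition gsubN (u : gsub) := GSub (QPN (gvalP u)).
Definition gsubZ c (u : gsub) := GSub (QPZ c (gvalP u)).

HB.instance Definition _ := gen_eqMixin gsub.
HB.instance Definition _ := gen_choiceMixin gsub.

Ltac gsub_ext := move=> *; apply: gsub_eq => /=.
Lemma gsubA : associative gsubD. Proof. by gsub_ext; rewrite addrA. Qed.
Lemma gsubC : commutative gsubD. Proof. by gsub_ext; rewrite addrC. Qed.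
Lemma gsub0D : left_id gsub0 gsubD. Proof. by gsub_ext; rewrite add0r. Qed.
Lemma gsubND : left_inverse gsub0 gsubN gsubD. Proof. by gsub_ext; rewrite addNr. Qed.
HB.instance Definition _ := GRing.isZmodule.Build gsub gsubA gsubC gsub0D gsubND.
Lemma gsubZA a b (v : gsub) : gsubZ a (gsubZ b v) = gsubZ (a * b) v.
Proof. by gsub_ext; rewrite scalerA. Qed.
Lemma gsubZ1 : left_id 1 gsubZ. Proof. by gsub_ext; rewrite scale1r. Qed.
Lemma gsubZDr : right_distributive gsubZ +%R. Proof. by gsub_ext; rewrite scalerDr. Qed.
Lemma gsubZDl (v : gsub) : {morph gsubZ^~ v : a b / a + b}. Proof. by gsub_ext; rewrite scalerDl. Qed.
HB.instance Definition _ := GRing.Zmodule_isLmodule.Build k gsub gsubZA gsubZ1 gsubZDr gsubZDl.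

Lemma gvalD (u v : gsub) : gval (u + v) = gval u + gval v. Proof. by []. Qed.
Lemma gvalZ c (u : gsub) : gval (c *: u) = c *: gval u. Proof. by []. Qed.
Lemma gval0 : gval (0 : gsub) = 0. Proof. by []. Qed.
Lemma gval_lin : lin_fun gval. Proof. by []. Qed.

Definition gmk (v : V) : gsub :=
  match pselect (QP v) with left h => GSub h | right _ => 0 end.
Lemma gmkE v : QP v -> gval (gmk v) = v.
Proof. by rewrite /gmk; case: pselect. Qed.
End Gsub.

Section Go.
Variables (k : comPzRingType) (G : groupType) (C : gcat k G).

Lemma ofam_ext (x y : obj C) (f g : ofam C x y) : (forall b a, f b a = g b a) -> f = g.
Proof.
move=> h; apply: functional_extensionality_dep => b.
by apply: functional_extensionality_dep => a; apply: h.
Qed.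

Definition okM (M : gomod C) := is_omod (gmod M) /\ is_graded M.

Definition GoOb (M : gomod C) (x : obj C) : lmodType k :=
  @gsub k (oob (gmod M) x) (ggr M x 1%g).
Definition Gomap (M : gomod C) (x y : obj C) (f : hom C x y) (m : GoOb M y) : GoOb M x :=
  @gmk _ _ (ggr M x 1%g) (omap (gmod M) (Pmor f) (gval m)).
Definition Go (M : gomod C) : cmod C := @CMod k C (GoOb M) (@Gomap M).
Definition Gh (M N : gomod C) (u : ohom M N) : chom (Go M) (Go N) :=
  fun x m => @gmk _ _ (ggr N x 1%g) (u x (gval m)).

Section OkM.
Variable (M : gomod C).
Hypothesis HM : okM M.

Lemma closed_gr x a : closedP (ggr M x a).
Proof. by case: HM => _ [h _ _ _]; case: (h x a). Qed.
Lemma QP_gr x a v : QP (ggr M x a) v <-> ggr M x a v.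
Proof. by split=> [h|h _]; [apply: h; apply: closed_gr|]. Qed.
Lemma gval_gr x (m : GoOb M x) : ggr M x 1%g (gval m).
Proof. by apply/QP_gr; apply: gvalP. Qed.

Lemma omap_lin (x y : obj C) (f : ofam C x y) : ofam_ok f -> lin_fun (omap (gmod M) f).
Proof. by case: HM => [[h _ _ _] _]; apply: h. Qed.
Lemma omap0 (x y : obj C) (f : ofam C x y) : ofam_ok f -> omap (gmod M) f 0 = 0.
Proof. by move=> hf; apply: lin0 (omap_lin hf). Qed.
Lemma omap_olin (x y : obj C) c (f g : ofam C x y) m : ofam_ok f -> ofam_ok g ->
  omap (gmod M) (olin c f g) m = c *: omap (gmod M) f m + omap (gmod M) g m.
Proof. by case: HM => [[_ h _ _] _]; apply: h. Qed.
Lemma omap_id (x : obj C) m : omap (gmod M) (oid C x) m = m.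
Proof. by case: HM => [[_ _ h _] _]; apply: h. Qed.
Lemma omap_comp (x y z : obj C) (g : ofam C y z) (f : ofam C x y) m : ofam_ok f -> ofam_ok g ->
  omap (gmod M) (ocomp g f) m = omap (gmod M) f (omap (gmod M) g m).
Proof. by case: HM => [[_ _ _ h] _]; apply: h. Qed.
Lemma gr_deg (x y : obj C) (f : ofam C y x) (b a : G) m : ofam_ok f -> odeg f b ->
  ggr M x a m -> ggr M y (a * b)%g (omap (gmod M) f m).
Proof. by case: HM => _ [_ _ _ h]; apply: h. Qed.
End OkM.

Lemma odeg_Pmor (x y : obj C) (f : hom C x y) : odeg (Pmor f) 1%g.
Proof.
move=> mu lam ne; apply: Pmor_off; apply: contra ne => /eqP ->.
by rewrite mulVg.
Qed.

Lemma Gomap_val (M : gomod C) (x y : obj C) (f : hom C x y) (m : GoOb M y) : okM M ->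
  gval (cmap (Go M) f m) = omap (gmod M) (Pmor f) (gval m).
Proof.
move=> hM; rewrite /= /Gomap gmkE //; apply/QP_gr => //.
by have := gr_deg hM (ofam_ok_Pmor f) (odeg_Pmor f) (gval_gr hM m); rewrite mulg1.
Qed.

Lemma Gh_val (M N : gomod C) (u : ohom M N) x (m : GoOb M x) : okM M -> okM N -> deg_pres u ->
  gval (Gh u m) = u x (gval m).
Proof.
move=> hM hN hu; rewrite /Gh gmkE //; apply/QP_gr => //; apply: hu; exact: gval_gr.
Qed.

Lemma Pmor_lin (x y : obj C) c (f g : hom C x y) : Pmor (c *: f + g) = olin c (Pmor f) (Pmor g).
Proof.
apply: ofam_ext => b a; rewrite /olin; have [<-|ne] := eqVneq a b.
  by rewrite !Pmor_diag gacth_lin.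
by rewrite !Pmor_off // scaler0 addr0.
Qed.

Lemma Pmor_comp (x y z : obj C) (g : hom C y z) (f : hom C x y) :
  Pmor (comp g f) = ocomp (Pmor g) (Pmor f).
Proof.
apply: ofam_ext => b a; rewrite /ocomp (@osum1 _ _ _ a); last first.
  by move=> c nc; rewrite (Pmor_off f) ?compm0 // eq_sym.
have [<-|ne] := eqVneq a b.
  by rewrite !Pmor_diag gacth_comp.
by rewrite (Pmor_off (comp g f) ne) (Pmor_off g ne) comp0m.
Qed.

Lemma Go_ok (M : gomod C) : okM M -> is_cmod (Go M).
Proof.
move=> hM; split.
- move=> x y f c u v; apply: gsub_eq; rewrite gvalD gvalZ !Gomap_val //.
  by rewrite gvalD gvalZ; apply: omap_lin => //; apply: ofam_ok_Pmor.
- move=> x y c f g m; apply: gsub_eq; rewrite gvalD gvalZ !Gomap_val //.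
  by rewrite Pmor_lin omap_olin //; apply: ofam_ok_Pmor.
- by move=> x m; apply: gsub_eq; rewrite Gomap_val // omap_id.
move=> x y z g f m; apply: gsub_eq; rewrite !Gomap_val // Pmor_comp omap_comp //;
  exact: ofam_ok_Pmor.
Qed.

Lemma Gh_ok (M N : gomod C) (u : ohom M N) : okM M -> okM N -> is_ohom u -> deg_pres u ->
  is_chom (Gh u).
Proof.
move=> hM hN [hl hn] hd; split.
- move=> x c v w; apply: gsub_eq; rewrite gvalD gvalZ !Gh_val //.
  by rewrite gvalD gvalZ hl.
move=> x y f m; apply: gsub_eq; rewrite Gh_val // !Gomap_val // hn ?Gh_val //.
exact: ofam_ok_Pmor.
Qed.

Lemma P_functor : @is_pfunctor (ModC C) (ModGorb C) (@Pob k G C) (fun X Y u => pd_hom u).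
Proof.
split.
- move=> X hX; split; [exact: pushdown_omod | exact: pushdown_graded].
- move=> X Y u hX hY hu; exact: pd_hom_ok.
- move=> X Y u v hX hY hu hv he x m; apply: dsum_ext => a.
  by rewrite !pd_homE // he.
- move=> X hX x m /=; apply: dsum_ext => a.
  have hid : is_chom (fun x (m : cob X x) => m) by split.
  by rewrite (pd_homE _ _ hid).
move=> X Y Z u v hX hY hZ hu hv x m /=.
have hvu : is_chom (fun x (m : cob X x) => v x (u x m)).
  case: hu => hl hn; case: hv => hl' hn'; split.
    by move=> y c w w'; rewrite hl hl'.
  by move=> y z f m'; rewrite hn hn'.
apply: dsum_ext => a.
by rewrite (pd_homE _ _ hvu) !pd_homE.
Qed.

Lemma Go_functor : @is_pfunctor (ModGorb C) (ModC C) Go (fun M N u => Gh u).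
Proof.
split.
- move=> M hM; exact: Go_ok.
- by move=> M N u hM hN [hu hd]; apply: Gh_ok.
- move=> M N u v hM hN [hu hdu] [hv hdv] he x m; apply: gsub_eq.
  by rewrite !Gh_val // he.
- by move=> M hM x m; apply: gsub_eq; rewrite Gh_val.
move=> M N L u v hM hN hL [hu hdu] [hv hdv] x m /=; apply: gsub_eq.
rewrite !Gh_val //.
by move=> y a m' hm; apply: hdv; apply: hdu.
Qed.

End Go.

Section Iso1.
Variables (k : comPzRingType) (G : groupType) (C : gcat k G).

Definition tr (X : cmod C) (x y : obj C) (e : x = y) (m : cob X x) : cob X y :=
  eq_rect x (fun z => cob X z) m y e.

Lemma tr_lin (X : cmod C) (x y : obj C) (e : x = y) : lin_fun (@tr X x y e).
Proof. by subst. Qed.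
Lemma trK (X : cmod C) (x y : obj C) (e : x = y) m : tr e (tr (esym e) m) = m :> cob X y.
Proof. by subst. Qed.
Lemma trKV (X : cmod C) (x y : obj C) (e : x = y) m : tr (esym e) (tr e m) = m :> cob X x.
Proof. by subst. Qed.
Lemma cmap_hcast (X : cmod C) (x x' y y' : obj C) (ex : x = x') (ey : y = y') (f : hom C x y) m :
  cmap X (hcast ex ey f) (tr ey m) = tr ex (cmap X f m).
Proof. by subst. Qed.
Lemma cmap_hcast2 (X : cmod C) (x x' y y' : obj C) (ex : x' = x) (ey : y' = y) (f : hom C x y) v :
  tr ex (cmap X (hcast (esym ex) (esym ey) f) v) = cmap X f (tr ey v).
Proof. by subst. Qed.
Lemma chom_tr (X Y : cmod C) (u : chom X Y) (x y : obj C) (e : x = y) m :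
  u y (tr e m) = tr e (u x m).
Proof. by subst. Qed.

Unset Implicit Arguments.
Section Dsing.
Variables (X : cmod C) (x : obj C).
Definition dsing_f (a : G) (v : cob X (gact C a x)) (b : G) : cob X (gact C b x) :=
  match a =P b with
  | ReflectT e => eq_rect a (fun c => cob X (gact C c x)) v b e
  | ReflectF _ => 0 end.
Lemma dsing_P a v : fin_suppd (dsing_f a v).
Proof. by exists [:: a] => b; rewrite inE /dsing_f eq_sym; case: eqP. Qed.
Definition dsing a v : pd_ob X x := DSum (dsing_P a v).
Lemma dsing_at a v : dval (dsing a v) a = v.
Proof. by rewrite /= /dsing_f; case: eqP => // e; rewrite (eq_irrelevance e erefl). Qed.
Lemma dsing_off a v b : a != b -> dval (dsing a v) b = 0.
Proof. by rewrite /= /dsing_f; case: eqP. Qed.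
End Dsing.
Arguments dsing_f {X x} a v b. Arguments dsing {X x} a v.
Arguments dsing_at {X x} a v. Arguments dsing_off {X x} a v b.
Set Implicit Arguments.

Unset Implicit Arguments.
Definition eta1 (X : cmod C) : chom X (Go (Pob X)) :=
  fun x m => @gmk _ _ (ggr (Pob X) x 1%g) (dsing 1%g (tr (esym (gact1 _ _ C x)) m)).
Definition eta1' (X : cmod C) : chom (Go (Pob X)) X :=
  fun x w => tr (gact1 _ _ C x) (dval (gval w) 1%g).

Set Implicit Arguments.
Lemma okPob (X : cmod C) : is_cmod X -> okM (Pob X).
Proof. by move=> hX; split; [exact: pushdown_omod|exact: pushdown_graded]. Qed.

Lemma eta1_val (X : cmod C) x m : gval (eta1 X x m) = dsing 1%g (tr (esym (gact1 _ _ C x)) m).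
Proof. by rewrite /eta1 gmkE // => _ b nb; rewrite dsing_off // eq_sym. Qed.

Section OneX.
Variable (X : cmod C).
Hypothesis hX : is_cmod X.

Lemma eta1_chom : is_chom (eta1 X).
Proof.
split.
- move=> x c u v; apply: gsub_eq; rewrite gvalD gvalZ !eta1_val.
  apply: dsum_ext => b; rewrite dvalD dvalZ.
  have [<-|nb] := eqVneq 1%g b; first by rewrite !dsing_at tr_lin.
  by rewrite !dsing_off // scaler0 addr0.
move=> x y f m; apply: gsub_eq; rewrite eta1_val Gomap_val; last exact: okPob.
rewrite eta1_val.
apply: dsum_ext => b; rewrite pd_mapE //; last exact: ok_row (ofam_ok_Pmor f).
rewrite (@osum1 _ _ _ 1%g); last by move=> c nc; rewrite dsing_off ?cmapm0 // eq_sym.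
rewrite dsing_at; have [<-|nb] := eqVneq 1%g b.
  by rewrite dsing_at Pmor_diag gacth1 cmap_hcast.
by rewrite dsing_off // Pmor_off ?cmap0m // eq_sym.
Qed.

Lemma eta1'_chom : is_chom (eta1' X).
Proof.
split.
- by move=> x c u v; rewrite /eta1' gvalD gvalZ dvalD dvalZ tr_lin.
move=> x y f w; rewrite /eta1' Gomap_val; last exact: okPob.
rewrite /= pd_mapE //; last exact: ok_row (ofam_ok_Pmor f).
rewrite (@osum1 _ _ _ 1%g); last by move=> c nc; rewrite Pmor_off ?cmap0m // eq_sym.
by rewrite Pmor_diag gacth1 cmap_hcast2.
Qed.

Lemma eta1K x m : eta1' X x (eta1 X x m) = m.
Proof. by rewrite /eta1' eta1_val dsing_at trK. Qed.

Lemma eta1K' x w : eta1 X x (eta1' X x w) = w.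
Proof.
apply: gsub_eq; rewrite eta1_val /eta1' trKV; apply: dsum_ext => b.
have [<-|nb] := eqVneq 1%g b; first by rewrite dsing_at.
rewrite dsing_off //; symmetry; apply: (gval_gr (okPob hX) w); by rewrite eq_sym.
Qed.
End OneX.

Lemma eta1_nat (X Y : cmod C) (u : chom X Y) : is_cmod X -> is_cmod Y -> is_chom u ->
  forall x m, eta1 Y x (u x m) = Gh (pd_hom u) (eta1 X x m).
Proof.
move=> hX hY hu x m; apply: gsub_eq; rewrite Gh_val; try exact: okPob; last by case: (pd_hom_ok hX hY hu).
rewrite !eta1_val; apply: dsum_ext => b; rewrite pd_homE //.
have [<-|nb] := eqVneq 1%g b; first by rewrite !dsing_at chom_tr.
by rewrite !dsing_off //; case: hu => hl _; rewrite (lin0 (hl _)).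
Qed.

End Iso1.
Arguments eta1 {k G C} X. Arguments eta1' {k G C} X.

Section PhiPsi.
Variables (k : comPzRingType) (G : groupType) (C : gcat k G).

Lemma hcast_idm_eq (u v w z : obj C) (e : u = v) (e1 : u = w) (e2 : u = z) (e3 : v = w) (e4 : v = z) :
  hcast e1 e2 (idm u) = hcast e3 e4 (idm v).
Proof. by subst; apply: hcast_irr. Qed.

Lemma gacth_hcast d (x x' y y' : obj C) (ex : x = x') (ey : y = y') (f : hom C x y) :
  gacth C d (hcast ex ey f) = hcast (congr1 (gact C d) ex) (congr1 (gact C d) ey) (gacth C d f).
Proof. by subst. Qed.

Unset Implicit Arguments.
Definition phi (x : obj C) (a : G) : ofam C x (gact C a x) := fun b c =>
  match (b * a)%g =P c with
  | ReflectT e => hcast (congr1 (fun d => gact C d x) e) (gactM C b a x) (idm (gact C (b * a)%g x))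
  | ReflectF _ => 0 end.
Definition psi (x : obj C) (a : G) : ofam C (gact C a x) x := fun b c =>
  match (c * a)%g =P b with
  | ReflectT e => hcast (gactM C c a x) (congr1 (fun d => gact C d x) e) (idm (gact C (c * a)%g x))
  | ReflectF _ => 0 end.
Set Implicit Arguments.

Variables (x : obj C) (a : G).

Lemma phi_val b c (e : (b * a)%g = c) :
  phi x a b c = hcast (congr1 (fun d => gact C d x) e) (gactM C b a x) (idm (gact C (b * a)%g x)).
Proof. by rewrite /phi; case: eqP => [e'|/(_ e)] //; rewrite (eq_irrelevance e' e). Qed.
Lemma phi_diag b : phi x a b (b * a)%g = hcast erefl (gactM C b a x) (idm _).
Proof. by rewrite (phi_val (erefl _)); apply: hcast_irr. Qed.
Lemma phi_off b c : (b * a)%g != c -> phi x a b c = 0.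
Proof. by rewrite /phi; case: eqP. Qed.

Lemma psi_val b c (e : (c * a)%g = b) :
  psi x a b c = hcast (gactM C c a x) (congr1 (fun d => gact C d x) e) (idm (gact C (c * a)%g x)).
Proof. by rewrite /psi; case: eqP => [e'|/(_ e)] //; rewrite (eq_irrelevance e' e). Qed.
Lemma psi_diag c : psi x a (c * a)%g c = hcast (gactM C c a x) erefl (idm _).
Proof. by rewrite (psi_val (erefl _)); apply: hcast_irr. Qed.
Lemma psi_off b c : (c * a)%g != b -> psi x a b c = 0.
Proof. by rewrite /psi; case: eqP. Qed.

Lemma phi_ok : ofam_ok (phi x a).
Proof.
split.
- move=> c; exists [:: (c * a^-1)%g] => b; rewrite inE => nb; apply: phi_off.
  by apply: contra nb => /eqP <-; rewrite mulgK.
- by move=> b; exists [:: (b * a)%g] => c; rewrite inE eq_sym => /phi_off.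
move=> d b c; have [<-|ne] := eqVneq (b * a)%g c.
  rewrite (phi_val (esym (mulgA d b a))) phi_diag gacth_hcast gacth_id !hcast_trans.
  apply: (hcast_idm_eq (etrans (congr1 (fun t => gact C t x) (esym (mulgA d b a))) (gactM C d (b * a) x))).
rewrite !phi_off ?gacth0 ?hcast0 //.
by apply: contra ne => /eqP; rewrite -mulgA => /mulgI ->.
Qed.

Lemma psi_ok : ofam_ok (psi x a).
Proof.
split.
- by move=> c; exists [:: (c * a)%g] => b; rewrite inE eq_sym => /psi_off.
- move=> b; exists [:: (b * a^-1)%g] => c; rewrite inE => nc; apply: psi_off.
  by apply: contra nc => /eqP <-; rewrite mulgK.
move=> d b c; have [<-|ne] := eqVneq (c * a)%g b.
  rewrite (psi_val (esym (mulgA d c a))) psi_diag gacth_hcast gacth_id !hcast_trans.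
  apply: (hcast_idm_eq (etrans (congr1 (fun t => gact C t x) (esym (mulgA d c a))) (gactM C d (c * a) x))).
rewrite !psi_off ?gacth0 ?hcast0 //.
by apply: contra ne => /eqP; rewrite -mulgA => /mulgI ->.
Qed.

Lemma phi_deg : odeg (phi x a) a.
Proof.
move=> mu lam ne; apply: phi_off; apply: contra ne => /eqP <-.
by rewrite mulKg.
Qed.

Lemma psi_deg : odeg (psi x a) a^-1.
Proof.
move=> mu lam ne; apply: psi_off; apply: contra ne => /eqP <-.
apply/eqP; apply: (mulgI (lam * a)%g); by rewrite mulVKg mulgK.
Qed.

Lemma phi_psi : ocomp (phi x a) (psi x a) = oid C (gact C a x).
Proof.
apply: ofam_ext => b c; rewrite /ocomp (@osum1 _ _ _ (b * a)%g); last first.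
  by move=> d nd; rewrite phi_off ?comp0m // eq_sym.
rewrite phi_diag; have [<-|ne] := eqVneq c b.
  by rewrite psi_diag hcast_comp comp1m hcast_id /oid Pmor_diag gacth_id.
rewrite psi_off ?compm0 /oid ?Pmor_off //.
by apply: contra ne => /eqP /mulIg ->.
Qed.

Lemma psi_phi : ocomp (psi x a) (phi x a) = oid C x.
Proof.
have H : forall b0 c, ocomp (psi x a) (phi x a) (b0 * a)%g c = oid C x (b0 * a)%g c.
  move=> b0 c; rewrite /ocomp (@osum1 _ _ _ b0); last first.
    move=> d nd; rewrite psi_off ?comp0m //; by apply: contra nd => /eqP /mulIg ->.
  rewrite psi_diag; have [<-|ne] := eqVneq (b0 * a)%g c.
    by rewrite phi_diag hcast_comp comp1m hcast_id /oid Pmor_diag gacth_id.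
  by rewrite phi_off ?compm0 /oid ?Pmor_off // eq_sym.
apply: ofam_ext => b c; have := H (b * a^-1)%g c; by rewrite mulgVK.
Qed.

End PhiPsi.
Arguments phi {k G C} x a. Arguments psi {k G C} x a.
Arguments phi_ok {k G C} x a. Arguments psi_ok {k G C} x a.
Arguments phi_deg {k G C} x a. Arguments psi_deg {k G C} x a.
Arguments phi_psi {k G C} x a. Arguments psi_phi {k G C} x a.

Section Ofsum.
Variables (k : comPzRingType) (G : groupType) (C : gcat k G).

Definition ofsum (x y : obj C) (r : seq G) (A : G -> ofam C x y) : ofam C x y :=
  foldr (fun a acc => olin 1 (A a) acc) (ofam0 x y) r.

Lemma ofsumE (x y : obj C) r (A : G -> ofam C x y) d e :
  ofsum r A d e = \sum_(a <- r) A a d e.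
Proof.
elim: r => [|a r IH]; first by rewrite big_nil.
by rewrite big_cons /= /olin scale1r IH.
Qed.

Lemma ofsum_ok (x y : obj C) r (A : G -> ofam C x y) :
  (forall a, ofam_ok (A a)) -> ofam_ok (ofsum r A).
Proof.
move=> hA; elim: r => [|a r IH]; first exact: ofam_ok0.
exact: ofam_ok_lin.
Qed.

Lemma omap_ofam0 (M : gomod C) (x y : obj C) m : okM M -> omap (gmod M) (ofam0 x y) m = 0.
Proof.
move=> hM; have E := omap_olin hM 1 m (ofam_ok0 x y) (ofam_ok0 x y).
have E0 : olin 1 (ofam0 x y) (ofam0 x y) = ofam0 x y.
  by apply: ofam_ext => b a; rewrite /olin /ofam0 scaler0 addr0.
rewrite E0 scale1r in E.
by have := congr1 (fun z => z - omap (gmod M) (ofam0 x y) m) E; rewrite /= subrr addrK => E'; rewrite -E'.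
Qed.

Lemma omap_ofsum (M : gomod C) (x y : obj C) r (A : G -> ofam C x y) w : okM M ->
  (forall a, ofam_ok (A a)) ->
  \sum_(a <- r) omap (gmod M) (A a) w = omap (gmod M) (ofsum r A) w.
Proof.
move=> hM hA; elim: r => [|a r IH]; first by rewrite big_nil omap_ofam0.
by rewrite big_cons /= omap_olin ?scale1r ?IH //; apply: ofsum_ok.
Qed.

Lemma compm_hid (u v w : obj C) (e : u = v) (g : hom C v w) :
  comp g (hcast erefl e (idm u)) = hcast (esym e) erefl g.
Proof. by subst; rewrite compm1. Qed.
Lemma comp_hidm (u v w : obj C) (e : u = v) (h : hom C w u) :
  comp (hcast erefl e (idm u)) h = hcast erefl e h.
Proof. by subst; rewrite comp1m. Qed.

Lemma key_comp (x y : obj C) (f : ofam C x y) (b : G) (t : seq G) :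
  ofam_ok f -> (forall a, a \notin t -> f b a = 0) ->
  ofsum (undup t) (fun a => ocomp (Pmor (f b a)) (phi x a)) = ocomp (phi y b) f.
Proof.
move=> hf ht.
have H : forall d a0, ofsum (undup t) (fun a => ocomp (Pmor (f b a)) (phi x a)) d (d * a0)%g
                      = ocomp (phi y b) f d (d * a0)%g.
  move=> d a0; rewrite ofsumE.
  have Ea : forall a, ocomp (Pmor (f b a)) (phi x a) d (d * a0)%g =
                      comp (gacth C d (f b a)) (phi x a d (d * a0)%g).
    move=> a; rewrite /ocomp (@osum1 _ _ _ d); first by rewrite Pmor_diag.
    by move=> c nc; rewrite Pmor_off ?comp0m // eq_sym.
  rewrite (eq_bigr _ (fun a _ => Ea a)).
  rewrite (@sum_single _ _ _ _ a0) ?undup_uniq //; last first.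
    move=> a na; rewrite phi_off ?compm0 //; by apply: contra na => /eqP /mulgI ->.
  have -> : (if a0 \in undup t then comp (gacth C d (f b a0)) (phi x a0 d (d * a0)%g) else 0)
            = comp (gacth C d (f b a0)) (phi x a0 d (d * a0)%g).
    case: ifP => // /negbT; rewrite mem_undup => /ht ->; by rewrite gacth0 comp0m.
  rewrite /ocomp (@osum1 _ _ _ (d * b)%g); last first.
    by move=> c nc; rewrite phi_off ?comp0m // eq_sym.
  case: hf => _ _ f3.
  rewrite phi_diag phi_diag f3 compm_hid comp_hidm hcast_trans.
  exact: hcast_irr.
apply: ofam_ext => d e; have := H d (d^-1 * e)%g; by rewrite mulVKg.
Qed.

End Ofsum.

Section Compo.
Variables (k : comPzRingType) (G : groupType) (C : gcat k G).

Definition decomp (M : gomod C) (x : obj C) (m : oob (gmod M) x) (s : seq G)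
  (h : G -> oob (gmod M) x) : Prop :=
  [/\ uniq s, forall a, ggr M x a (h a) & m = \sum_(a <- s) h a].

Unset Implicit Arguments.
Definition compo (M : gomod C) (x : obj C) (a : G) (m : oob (gmod M) x) : oob (gmod M) x :=
  match pselect (exists s h, decomp m s h) with
  | left e => let (s, e1) := cid e in let (h, _) := cid e1 in if a \in s then h a else 0
  | right _ => 0 end.
Set Implicit Arguments.

Lemma sum_if (V : lmodType k) (s t : seq G) (h : G -> V) : uniq s -> uniq t -> {subset s <= t} ->
  \sum_(a <- t) (if a \in s then h a else 0) = \sum_(a <- s) h a.
Proof.
move=> us ut st; rewrite -big_mkcond -big_filter; apply: perm_big.
apply: uniq_perm; rewrite ?filter_uniq // => a; rewrite mem_filter.
by case: (boolP (a \in s)) => //= /st ->.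
Qed.

Section OkM2.
Variables (M : gomod C).
Hypothesis hM : okM M.

Lemma gr0 x a : ggr M x a 0. Proof. by case: (closed_gr hM x a). Qed.
Lemma grl x a c u v : ggr M x a u -> ggr M x a v -> ggr M x a (c *: u + v).
Proof. by case: (closed_gr hM x a) => _; apply. Qed.
Lemma grB x a u v : ggr M x a u -> ggr M x a v -> ggr M x a (u - v).
Proof. by move=> hu hv; rewrite addrC -scaleN1r; apply: grl. Qed.
Lemma gr_if x a (b : bool) v : ggr M x a v -> ggr M x a (if b then v else 0).
Proof. by case: b => //; rewrite /=; move=> _; apply: gr0. Qed.

Lemma decomp_uniq x m s h s' h' : @decomp M x m s h -> @decomp M x m s' h' ->
  forall a, (if a \in s then h a else 0) = (if a \in s' then h' a else 0).
Proof.
case=> us hh ms [us' hh' ms'] a.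
set u := undup (s ++ s').
set H := fun a => (if a \in s then h a else 0) - (if a \in s' then h' a else 0).
have hH : forall a, ggr M x a (H a) by move=> b; apply: grB; apply: gr_if.
have sH : \sum_(b <- u) H b = 0.
  rewrite sumrB !sum_if ?undup_uniq // -?ms -?ms' ?subrr // => b; rewrite mem_undup mem_cat => ->.
    by rewrite orbT.
  by [].
have [au|nau] := boolP (a \in u).
  case: hM => _ [_ _ hd _]; have := hd x u H (undup_uniq _) hH sH a au.
  by move/eqP; rewrite /H subr_eq0 => /eqP.
move: nau; rewrite mem_undup mem_cat negb_or => /andP[/negbTE -> /negbTE ->] //.
Qed.

Lemma decomp_ex x m : exists s h, @decomp M x m s h.
Proof.
case: hM => _ [_ hd _ _]; have [s [h [us hh ms]]] := hd x m.
by exists s, h; split.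
Qed.

Lemma compoE x m s h a : @decomp M x m s h -> compo M x a m = if a \in s then h a else 0.
Proof.
move=> hd; rewrite /compo; case: pselect => [e|ne]; last first.
  by exfalso; apply: ne; exists s, h.
case: (cid e) => s1 e1; case: (cid e1) => h1 d1.
exact: decomp_uniq d1 hd a.
Qed.

Lemma compo_gr x a m : ggr M x a (compo M x a m).
Proof.
have [s [h hd]] := decomp_ex m; rewrite (compoE _ hd); apply: gr_if.
by case: hd.
Qed.

Lemma compo_sum x m : exists s, [/\ uniq s, (forall a, a \notin s -> compo M x a m = 0)
   & m = \sum_(a <- s) compo M x a m].
Proof.
have [s [h hd]] := decomp_ex m; exists s; split.
- by case: hd.
- by move=> a na; rewrite (compoE _ hd) (negbTE na).
case: hd => us hh ->; apply: eq_big_seq => a ais.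
by rewrite (compoE _ (And3 us hh (erefl _))) ais.
Qed.

End OkM2.
End Compo.
Arguments compo {k G C} M x a m.

Section Iso2.
Variables (k : comPzRingType) (G : groupType) (C : gcat k G).

Unset Implicit Arguments.
Definition eta2 (M : gomod C) : ohom (Pob (Go M)) M :=
  fun x xi => osum (fun a => omap (gmod M) (phi x a) (gval (dval xi a))).
Definition eta2f (M : gomod C) (x : obj C) (m : oob (gmod M) x) :
  forall a : G, cob (Go M) (gact C a x) :=
  fun a => @gmk _ _ (ggr M (gact C a x) 1%g) (omap (gmod M) (psi x a) (compo M x a m)).
Definition eta2' (M : gomod C) : ohom M (Pob (Go M)) :=
  fun x m => match pselect (fin_suppd (eta2f M x m)) with
             | left h => DSum h
             | right _ => 0 end.
Set Implicit Arguments.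

Lemma gmk0 (V : lmodType k) (P : V -> Prop) : @gmk _ _ P 0 = 0.
Proof. by apply: gsub_eq; rewrite gmkE //; apply: QP0. Qed.

Section OkM3.
Variables (M : gomod C).
Hypothesis hM : okM M.

Lemma hGo : is_cmod (Go M). Proof. exact: Go_ok. Qed.

Lemma eta2'_val x m a : gval (dval (eta2' M x m) a) = omap (gmod M) (psi x a) (compo M x a m).
Proof.
rewrite /eta2'; case: pselect => [h|nh] /=.
  rewrite /eta2f gmkE //; apply/(QP_gr hM).
  by have := gr_deg hM (psi_ok x a) (psi_deg x a) (compo_gr hM a m); rewrite mulgV.
exfalso; apply: nh; have [s [us hs ms]] := compo_sum hM m.
by exists s => b /hs; rewrite /eta2f => ->; rewrite omap0 ?gmk0 //; apply: psi_ok.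
Qed.

Lemma eta2_vsupp x (xi : pd_ob (Go M) x) :
  exists s : seq G, forall a, a \notin s -> gval (dval xi a) = 0.
Proof. by case: (dvalP xi) => s hs; exists s => a /hs ->. Qed.

Lemma eta2K x xi : eta2' M x (eta2 M x xi) = xi.
Proof.
have [s hs] := eta2_vsupp xi.
set h := fun a => omap (gmod M) (phi x a) (gval (dval xi a)).
have hh : forall a, a \notin s -> h a = 0.
  by move=> a /hs; rewrite /h => ->; rewrite omap0 //; apply: phi_ok.
have hd : decomp (eta2 M x xi) (undup s) h.
  split; first exact: undup_uniq.
    move=> a; have := gr_deg hM (phi_ok x a) (phi_deg x a) (gval_gr hM (dval xi a)).
    by rewrite mul1g.
  exact: osumE'.
apply: dsum_ext => a; apply: gsub_eq; rewrite eta2'_val (compoE hM _ hd).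
have -> : (if a \in undup s then h a else 0) = h a.
  by case: ifP => // /negbT; rewrite mem_undup => /hh ->.
rewrite /h -omap_comp //; try exact: phi_ok; try exact: psi_ok.
by rewrite phi_psi omap_id.
Qed.

Lemma eta2K' x m : eta2 M x (eta2' M x m) = m.
Proof.
rewrite /eta2; have [s [us hs ms]] := compo_sum hM m.
rewrite (@osumE _ _ _ s) //; last first.
  by move=> a /hs ha; rewrite eta2'_val ha !omap0 //; [apply: phi_ok|apply: psi_ok].
rewrite [RHS]ms; apply: eq_bigr => a _.
rewrite eta2'_val -omap_comp //; try exact: phi_ok; try exact: psi_ok.
by rewrite psi_phi omap_id.
Qed.

Lemma eta2_inj x (p q : pd_ob (Go M) x) : eta2 M x p = eta2 M x q -> p = q.
Proof. by move=> E; rewrite -(eta2K p) -(eta2K q) E. Qed.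

Lemma eta2_lin x : lin_fun (eta2 M x).
Proof.
move=> c u v; rewrite /eta2.
have [s hs] := eta2_vsupp u; have [t ht] := eta2_vsupp v.
rewrite -(@osum_linc _ _ _ _ _ _ (s ++ t)).
- apply: osum_ext => a; rewrite dvalD dvalZ gvalD gvalZ.
  by apply: omap_lin => //; apply: phi_ok.
- move=> a; rewrite mem_cat negb_or => /andP[/hs -> _]; apply: omap0 => //; apply: phi_ok.
- move=> a; rewrite mem_cat negb_or => /andP[_ /ht ->]; apply: omap0 => //; apply: phi_ok.
Qed.

Lemma eta2_deg : deg_pres (eta2 M).
Proof.
move=> x a xi hxi; rewrite /eta2 (@osum1 _ _ _ a); last first.
  by move=> b nb; rewrite hxi // gval0 omap0 //; apply: phi_ok.
have := gr_deg hM (phi_ok x a) (phi_deg x a) (gval_gr hM (dval xi a)).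
by rewrite mul1g.
Qed.

Lemma eta2'_deg : deg_pres (eta2' M).
Proof.
move=> x a m hm b nb; apply: gsub_eq; rewrite eta2'_val gval0.
have hd : decomp m [:: a] (fun c => if c == a then m else 0).
  split=> //; first by move=> c; case: eqP => [->|_] //; apply: gr0.
  by rewrite big_seq1 eqxx.
by rewrite (compoE hM _ hd) inE (negbTE nb) omap0 //; apply: psi_ok.
Qed.

End OkM3.
End Iso2.
Arguments eta2 {k G C} M. Arguments eta2' {k G C} M. Arguments eta2f {k G C} M x m a.

Section Iso2b.
Variables (k : comPzRingType) (G : groupType) (C : gcat k G).

Lemma Pmor0 (x y : obj C) : Pmor (0 : hom C x y) = ofam0 x y.
Proof.
apply: ofam_ext => b a; rewrite /ofam0; have [<-|ne] := eqVneq a b.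
  by rewrite Pmor_diag gacth0.
by rewrite Pmor_off.
Qed.

Section OkM4.
Variables (M : gomod C).
Hypothesis hM : okM M.

Lemma eta2_nat x y (f : ofam C x y) (xi : pd_ob (Go M) y) : ofam_ok f ->
  eta2 M x (omap (gmod (Pob (Go M))) f xi) = omap (gmod M) f (eta2 M y xi).
Proof.
move=> hf; have [s hs0] := dvalP xi.
have hs : forall b, b \notin s -> gval (dval xi b) = 0 by move=> b /hs0 ->.
have S1 : forall a, gval (dval (omap (gmod (Pob (Go M))) f xi) a) =
    osum (fun b => omap (gmod M) (Pmor (f b a)) (gval (dval xi b))).
  move=> a; rewrite /= pd_mapE; last exact: ok_row hf; last exact: hGo.
  rewrite (@osum_lin _ _ _ _ _ _ s); first last.
  - by move=> b /hs0 ->; apply: cmapm0; apply: hGo.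
  - exact: gval_lin.
  by apply: osum_ext => b; rewrite Gomap_val.
rewrite /eta2 (osum_ext (fun a => congr1 _ (S1 a))).
have S2 : forall a, omap (gmod M) (phi x a)
     (osum (fun b => omap (gmod M) (Pmor (f b a)) (gval (dval xi b)))) =
   osum (fun b => omap (gmod M) (phi x a) (omap (gmod M) (Pmor (f b a)) (gval (dval xi b)))).
  move=> a; apply: (@osum_lin _ _ _ _ _ _ s); first by apply: omap_lin => //; apply: phi_ok.
  by move=> b /hs ->; apply: omap0 => //; apply: ofam_ok_Pmor.
rewrite (osum_ext S2).
have [T hT] := fin_union (Q := fun b a => f b a = 0) (ok_row hf) s.
rewrite (osum_swap (s := T) (t := s)); first last.
- by move=> a b /hs ->; rewrite !omap0 //; [apply: phi_ok | apply: ofam_ok_Pmor].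
- move=> a b ha; have [bs|bns] := boolP (b \in s).
    by rewrite (hT b a bs ha) Pmor0 omap_ofam0 // omap0 //; apply: phi_ok.
  by rewrite hs // !omap0 //; [apply: phi_ok | apply: ofam_ok_Pmor].
rewrite (@osum_lin _ _ _ _ _ _ s); first last.
- by move=> b /hs ->; apply: omap0 => //; apply: phi_ok.
- exact: omap_lin.
apply: osum_ext => b; set w := gval (dval xi b).
have [t ht] := ok_row hf b.
rewrite (@osumE' _ _ _ t); last first.
  by move=> a /ht ->; rewrite Pmor0 omap_ofam0 // omap0 //; apply: phi_ok.
rewrite (eq_bigr (fun a => omap (gmod M) (ocomp (Pmor (f b a)) (phi x a)) w)); last first.
  by move=> a _; rewrite omap_comp //; [apply: phi_ok | apply: ofam_ok_Pmor].
rewrite omap_ofsum //; last by move=> a; apply: ocomp_ok; [apply: phi_ok | apply: ofam_ok_Pmor].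
rewrite (key_comp hf ht) omap_comp //; exact: phi_ok.
Qed.

Lemma eta2'_ohom : is_ohom (eta2' M).
Proof.
split.
- by move=> x c u v; apply: (eta2_inj hM); rewrite eta2_lin // !eta2K'.
by move=> x y f m hf; apply: (eta2_inj hM); rewrite eta2K' // eta2_nat // eta2K'.
Qed.

Lemma eta2_ohom : is_ohom (eta2 M).
Proof.
split; first by move=> x; apply: eta2_lin.
by move=> x y f m hf; apply: eta2_nat.
Qed.

End OkM4.

Lemma eta2_sq (M N : gomod C) (u : ohom M N) : okM M -> okM N -> is_ohom u -> deg_pres u ->
  forall x xi, eta2 N x (pd_hom (Gh u) xi) = u x (eta2 M x xi).
Proof.
move=> hM hN hu hd x xi; have [hl hn] := hu.
have [s hs] := eta2_vsupp xi.
rewrite /eta2 (@osum_lin _ _ _ _ _ _ s); first last.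
- by move=> a /hs ->; apply: omap0 => //; apply: phi_ok.
- exact: hl.
apply: osum_ext => a; rewrite pd_homE; last exact: Gh_ok.
by rewrite Gh_val // hn //; apply: phi_ok.
Qed.

End Iso2b.

Theorem mainTheorem16 (k : comPzRingType) (G : groupType) (C : gcat k G) :
  (forall X : cmod C, is_cmod X -> is_omod (pushdown X) /\ is_graded (Pob X)) /\
  (forall (X Y : cmod C) (u : chom X Y), is_cmod X -> is_cmod Y -> is_chom u ->
     is_ohom (pd_hom u) /\ deg_pres (pd_hom u)) /\
  @is_pequiv (ModC C) (ModGorb C) (@Pob k G C) (fun X Y u => pd_hom u).
Proof.
split; first by move=> X hX; split; [exact: pushdown_omod | exact: pushdown_graded].
split; first by move=> X Y u hX hY hu; exact: pd_hom_ok.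
split; first exact: P_functor.
exists (@Go k G C), (fun M N u => @Gh k G C M N u); split.
- exact: Go_functor.
- exists (fun X => eta1 X), (fun X => eta1' X); split.
    move=> X hX; split.
    + exact: eta1_chom.
    + exact: eta1'_chom.
    + by move=> x m; apply: eta1K.
    + by move=> x w; apply: eta1K'.
  by move=> X Y u hX hY hu x m; apply: eta1_nat.
exists (fun M => eta2 M), (fun M => eta2' M); split.
  move=> M hM; split.
  + by split; [exact: eta2_ohom | exact: eta2_deg].
  + by split; [exact: eta2'_ohom | exact: eta2'_deg].
  + by move=> x xi; apply: eta2K.
  + by move=> x m; apply: eta2K'.
by move=> M N u hM hN [hu hd] x xi; apply: eta2_sq.
Qed.
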